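(* Let $Q>0$ and $\Gamma>0$. Let $f$ be a positive random variable with a continuous probability density function, and let $I$ be a nonnegative random variable independent of $f$ with $\mathbb{E}[I]=\Gamma$. For $\epsilon_0\in[0,1)$: <ul> <li>Let $\theta_a\ge 0$ satisfy $\Pr\{f/(1+I)<\theta_a\}=\epsilon_0$, and let $\theta_p\ge0$ satisfy $\Pr\{f/(1+\Gamma)<\theta_p\}=\epsilon_0$.</li> <li>Let $\gamma_a$ be determined by $\mathbb{E}[q^a]=Q$, where $q^a=\frac{\gamma_a(1+I)}{f}\mathbf{1}\left(\frac{f}{1+I}\ge\theta_a\right)$.</li> <li>Let $\gamma_p$ be determined by $\mathbb{E}[q^p]=Q$, where $q^p=\frac{\gamma_p(1+\Gamma)}{f}\mathbf{1}\left(\frac{f}{1+\Gamma}\ge\theta_p\right)$.</li> <li>Set $C^{{\rm OUT},a}_{\rm PR,TCI}(\epsilon_0)=\log(1+\gamma_a)$ and $C^{{\rm OUT},p}_{\rm PR,TCI}(\epsilon_0)=\log(1+\gamma_p)$.</li> </ul> Then $C^{{\rm OUT},a}_{\rm PR,TCI}(\epsilon_0)\geq C^{{\rm OUT},p}_{\rm PR,TCI}(\epsilon_0)$ for all $\epsilon_0$.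
   Context: $\mathbf{1}(\cdot)$ denotes the indicator function. Setting: a primary radio (PR) fading link with channel power gain $f$ and unit noise power. $I$ is the interference power caused by a cognitive radio at the PR receiver, independent of $f$. In the average-interference-power (AIP) case $I$ is random with mean $\Gamma$; in the peak-interference-power (PIP) case the interference equals $\Gamma$ always. The PR uses truncated-channel-inversion (TCI) power control with average power $Q$ and outage probability $\epsilon_0$. It transmits only when the effective gain exceeds the threshold, and inverts the channel to achieve constant received SNR $\gamma_a$ (respectively $\gamma_p$). $\log(1+\gamma)$ is the resulting PR outage capacity. *)

(* Defs.v *)
From HB Require Import structures.
From mathcomp Require Import all_boot all_order all_algebra.
From mathcomp Require Import all_classical all_reals all_analysis.
Set Implicit Arguments. Unset Strict Implicit. Unset Printing Implicit Defensive.
Import Order.TTheory GRing.Theory Num.Theory.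
Import numFieldNormedType.Exports.
Local Open Scope classical_set_scope.
Local Open Scope ring_scope.

Definition indep_RV d (T : measurableType d) (R : realType)
  (P : probability T R) (X Y : T -> R) : Prop :=
  forall A B : set R, measurable A -> measurable B ->
    P (X @^-1` A `&` Y @^-1` B) = (P (X @^-1` A) * P (Y @^-1` B))%E.

Definition has_continuous_pdf d (T : measurableType d) (R : realType)
  (P : probability T R) (X : T -> R) : Prop :=
  exists p : R -> R, continuous p /\ (forall x, 0 <= p x) /\
    forall A : set R, measurable A ->
      P (X @^-1` A) = (\int[lebesgue_measure]_(x in A) (p x)%:E)%E.

(* Main.v *)
Require Import Defs.
From HB Require Import structures.
From mathcomp Require Import all_boot all_order all_algebra.
From mathcomp Require Import all_classical all_reals all_analysis.
Import Order.TTheory GRing.Theory Num.Theory.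
Import numFieldNormedType.Exports.
Local Open Scope classical_set_scope.
Local Open Scope ring_scope.
From mathcomp Require Import measurable_realfun.
Local Open Scope ereal_scope.

Lemma ind_ge0 (T : Type) (R : realType) (A : set T) (x : T) :
  (0 <= \1_A x :> R)%R.
Proof. by rewrite indicE; case: (_ \in _). Qed.
Arguments ind_ge0 {T R} A x.

Lemma mset_le d (T : measurableType d) (R : realType) (h : T -> R) (c : R) :
  measurable_fun setT h -> measurable [set x | (c <= h x)%R].
Proof.
move=> mh; have := mh measurableT _ (measurable_itv `[c, +oo[).
rewrite setTI; congr measurable; apply/seteqP; split => x /=;
  by rewrite in_itv /= andbT.
Qed.

Lemma mfun_inv d (T : measurableType d) (R : realType) (h : T -> R) :
  measurable_fun setT h -> (forall x, (0 < h x)%R) ->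
  measurable_fun setT (fun x => (h x)^-1)%R.
Proof.
move=> mh hp.
have -> : (fun x => (h x)^-1)%R = (fun x => expR (- ln (h x)))%R.
  by apply/funext => x; rewrite expRN lnK // posrE.
apply: measurableT_comp; first exact: measurable_expR.
apply: measurableT_comp; first exact: oppr_measurable.
apply: measurableT_comp => //; exact: measurable_ln.
Qed.

Lemma solve_gamma d (T : measurableType d) (R : realType)
  (mu : {measure set T -> \bar R}) (g : R) (s : T -> R) (Q : R) :
  (0 < Q)%R -> (forall x, (0 <= s x)%R) -> measurable_fun setT s ->
  \int[mu]_x (g * s x)%:E = Q%:E ->
  (0 < g)%R /\ g%:E * \int[mu]_x (s x)%:E = Q%:E.
Proof.
move=> Q0 s0 ms H.
have ms' : measurable_fun setT (fun x => (s x)%:E) by exact/measurable_EFinP.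
have [g0|gn] := ltrP 0%R g.
  split => //; rewrite -H -ge0_integralZl_EFin //; last exact: ltW.
  by move=> x _; rewrite lee_fin.
exfalso.
have : \int[mu]_x (g * s x)%:E <= 0.
  rewrite (_ : (fun x => _) = (fun x => - ((- g)%R%:E * (s x)%:E))); last first.
    by apply/funext => x; rewrite -EFinM -EFinN mulNr opprK.
  rewrite integral_ge0N; last by move=> x _; rewrite mule_ge0 // lee_fin ?oppr_ge0.
  rewrite oppe_le0; apply: integral_ge0 => x _.
  by rewrite mule_ge0 // lee_fin ?oppr_ge0.
by rewrite H lee_fin leNgt Q0.
Qed.

Lemma final_arith (R : realType) (ga gp : R) (a b : \bar R) (Q : R) :
  (0 < Q)%R -> (0 < ga)%R -> (0 < gp)%R -> 0 <= a -> a <= b ->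
  ga%:E * a = Q%:E -> gp%:E * b = Q%:E -> (gp <= ga)%R.
Proof.
move=> Q0 ga0 gp0.
case: a => [a| |] //; case: b => [b| |] //=; rewrite ?lee_fin => a0 ab.
- move=> /eqP; rewrite eqe => /eqP Ha /eqP; rewrite eqe => /eqP Hb.
  have a0' : (0 < a)%R.
    rewrite lt_neqAle a0 andbT; apply/eqP => a0'.
    by move: Ha; rewrite -a0' mulr0 => Q0'; rewrite -Q0' ltxx in Q0.
  rewrite -(ler_pM2r a0') Ha -Hb.
  by rewrite ler_pM2l.
- by move=> _; rewrite mulry gtr0_sg // mul1e.
- by move=> _; rewrite mulry gtr0_sg // mul1e.
Qed.
Lemma indep_mulE d (T : measurableType d) (R : realType) (P : probability T R)
  (f I : {RV P >-> R}) (g : R -> R) :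
  indep_RV P f I -> measurable_fun setT g -> (forall x, (0 <= g x)%R) ->
  (forall x, (0 <= I x)%R) ->
  \int[P]_x (I x * g (f x))%:E = 'E_P[I] * \int[P]_x (g (f x))%:E.
Proof.
move=> ind mg g0 I0.
pose phi := fun x => (f x, I x).
have mphi : measurable_fun setT phi by apply: measurable_fun_pair.
pose h : (R * R)%type -> \bar R := fun z => (`|z.2| * g z.1)%:E.
have mh : measurable_fun setT h.
  apply/measurable_EFinP; apply: measurable_funM.
    exact: measurableT_comp measurable_snd.
  exact: measurableT_comp measurable_fst.
have h0 z : 0 <= h z by rewrite lee_fin mulr_ge0.
transitivity (\int[P]_x (h \o phi) x).
  by apply: eq_integral => x _; rewrite /h /= ger0_norm.
have := ge0_integral_pushforward mphi P measurableT mh (fun z _ => h0 z).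
rewrite preimage_setT => <-.
rewrite (eq_measure_integral (distribution P f \x distribution P I)%E); last first.
  move=> A mA _; apply/esym; apply: product_measure_unique => // B C mB mC.
rewrite fubini_tonelli1 //.
rewrite /fubini_F.
have EI : \int[distribution P I]_y (`|y|%:E) = 'E_P[I].
  rewrite ge0_integral_distribution //; last first.
    by apply/measurable_EFinP; exact: normr_measurable.
  by rewrite expectation_def; apply: eq_integral => x _ /=; rewrite ger0_norm.
transitivity (\int[distribution P f]_x ('E_P[I] * (g x)%:E)).
  apply: eq_integral => x _.
  rewrite /h /= -EI muleC -ge0_integralZl_EFin //.
    by apply: eq_integral => y _; rewrite -EFinM mulrC.
  by apply/measurable_EFinP; exact: normr_measurable.
rewrite ge0_integralZl //.
- by rewrite ge0_integral_distribution //; exact/measurable_EFinP.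
- exact/measurable_EFinP.
- by move=> x _; rewrite lee_fin.
- by rewrite -EI integral_ge0.
Qed.

Local Close Scope ereal_scope.

Theorem theorem4p5 (d : measure_display) (T : measurableType d) (R : realType)
  (P : probability T R) (f I : {RV P >-> R}) (Q Gamma eps0 : R)
  (theta_a theta_p gamma_a gamma_p : R) :
  0 < Q -> 0 < Gamma ->
  (forall x, 0 < f x) -> has_continuous_pdf P f ->
  (forall x, 0 <= I x) -> indep_RV P f I ->
  ('E_P[I] = Gamma%:E)%E ->
  0 <= eps0 < 1 ->
  0 <= theta_a ->
  P [set x | f x / (1 + I x) < theta_a] = eps0%:E ->
  0 <= theta_p ->
  P [set x | f x / (1 + Gamma) < theta_p] = eps0%:E ->
  (\int[P]_x (gamma_a * (1 + I x) / f x
        * \1_[set y | theta_a <= f y / (1 + I y)] x)%:E)%E = Q%:E ->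
  (\int[P]_x (gamma_p * (1 + Gamma) / f x
        * \1_[set y | theta_p <= f y / (1 + Gamma)] x)%:E)%E = Q%:E ->
  ln (1 + gamma_p) <= ln (1 + gamma_a).
Proof.
move=> Q0 G0 fpos _ I0 ind EI /andP[e0 e1] ta0 PA tp0 PB Ha Hp.
have mf : measurable_fun setT f by exact: measurable_funPT.
have mI : measurable_fun setT I by exact: measurable_funPT.
have I1pos x : 0 < 1 + I x by rewrite ltr_pwDl.
have G1pos : 0 < 1 + Gamma by rewrite ltr_pwDl // ltW.
have mfinv : measurable_fun setT (fun x => (f x)^-1) by exact: mfun_inv.
have mI1 : measurable_fun setT (fun x => 1 + I x) by apply: measurable_funD.
pose Y x := (1 + I x) / f x.
have mY : measurable_fun setT Y by apply: measurable_funM.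
have Y0 x : 0 <= Y x by rewrite /Y divr_ge0 // ltW.
pose A := [set y | theta_a <= f y / (1 + I y)].
pose B := [set y | theta_p <= f y / (1 + Gamma)].
have mA : measurable A.
  apply: mset_le; apply: measurable_funM => //; exact: mfun_inv.
have mB : measurable B.
  by apply: mset_le; apply: measurable_funM.
have mYA : measurable_fun setT (fun x => Y x * \1_A x).
  by apply: measurable_funM => //; exact: measurable_indic.
have mYB : measurable_fun setT (fun x => Y x * \1_B x).
  by apply: measurable_funM => //; exact: measurable_indic.
have mCB : measurable_fun setT (fun x => (1 + Gamma) / f x * \1_B x).
  apply: measurable_funM; last exact: measurable_indic.
  by apply: measurable_funM.
have Ha2 : (\int[P]_x (gamma_a * (Y x * \1_A x))%:E)%E = Q%:E.
  by rewrite -Ha; apply: eq_integral => x _; rewrite /Y !mulrA.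
have [ga0 Ha'] := @solve_gamma _ _ _ P _ _ _ Q0 (fun x => mulr_ge0 (Y0 x) (ind_ge0 _ _)) mYA Ha2.
have Hp2 : (\int[P]_x (gamma_p * ((1 + Gamma) / f x * \1_B x))%:E)%E = Q%:E.
  by rewrite -Hp; apply: eq_integral => x _; rewrite !mulrA.
have [gp0 Hp'] := @solve_gamma _ _ _ P _ _ _ Q0 (fun x => mulr_ge0 (divr_ge0 (ltW G1pos) (ltW (fpos x))) (ind_ge0 _ _)) mCB Hp2.
suff gpa : gamma_p <= gamma_a.
  by rewrite ler_ln ?posrE ?lerD2l // ltr_pwDl // ltW.
apply: (@final_arith _ _ _ _ _ _ Q0 ga0 gp0 _ _ Ha' Hp').
  by apply: integral_ge0 => x _; rewrite lee_fin mulr_ge0 // ind_ge0.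
pose Bs := [set y : R | theta_p <= y / (1 + Gamma)].
pose g z := expR (- ln z) * \1_Bs z.
have mBs : measurable Bs.
  by apply: mset_le; apply: measurable_funM => //; exact: measurable_cst.
have mg : measurable_fun setT g.
  apply: measurable_funM; last exact: measurable_indic.
  apply: measurableT_comp; first exact: measurable_expR.
  apply: measurableT_comp; first exact: oppr_measurable.
  exact: measurable_ln.
have g0 z : 0 <= g z by rewrite mulr_ge0 ?expR_ge0 ?ind_ge0.
have gf x : (f x)^-1 * \1_B x = g (f x).
  by rewrite /g expRN lnK ?posrE.
have mgf : measurable_fun setT (fun x => g (f x)) by exact: measurableT_comp.
have bc : (\int[P]_x (Y x * \1_B x)%:E = \int[P]_x ((1 + Gamma) / f x * \1_B x)%:E)%E.
  transitivity (\int[P]_x ((g (f x))%:E + (I x * g (f x))%:E))%E.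
    by apply: eq_integral => x _; rewrite -EFinD /Y -mulrA gf mulrDl mul1r.
  have mgfE : measurable_fun setT (fun x => (g (f x))%:E) by apply/measurable_EFinP.
  have mIgE : measurable_fun setT (fun x => (I x * g (f x))%:E).
    by apply/measurable_EFinP; apply: measurable_funM.
  rewrite ge0_integralD //; try solve [move=> x _; rewrite lee_fin ?mulr_ge0 //].
  rewrite indep_mulE // EI.
  transitivity ((1 + Gamma)%:E * \int[P]_x (g (f x))%:E)%E; last first.
    rewrite -ge0_integralZl_EFin //; try solve [exact: ltW | by move=> x _; rewrite lee_fin].
    by apply: eq_integral => x _; rewrite -EFinM -mulrA gf.
  by rewrite EFinD ge0_muleDl ?lee_fin ?ltW // mul1e.
rewrite -bc.
have PAc : P (~` A) = eps0%:E.
  rewrite -PA; congr (P _); apply/seteqP; split => x /=.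
    by move/negP; rewrite -ltNge.
  by rewrite ltNge => /negP.
have PBc : P (~` B) = eps0%:E.
  rewrite -PB; congr (P _); apply/seteqP; split => x /=.
    by move/negP; rewrite -ltNge.
  by rewrite ltNge => /negP.
have PAB : P A = P B.
  have := probability_setC P (measurableC mA); rewrite setCK PAc => ->.
  by have := probability_setC P (measurableC mB); rewrite setCK PBc => ->.
have [ta_pos|ta_eq0] : 0 < theta_a \/ theta_a = 0.
  by move: ta0; rewrite le_eqVlt => /orP[/eqP <-|]; [right|left].
- pose k := theta_a^-1.
  have k0 : 0 <= k by rewrite invr_ge0 ltW.
  have fIpos x : 0 < f x / (1 + I x) by rewrite divr_gt0.
  have YA x : A x -> Y x <= k.
    move=> Ax; rewrite /Y /k -invf_div lef_pV2 ?posrE //.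
  have YnA x : ~ A x -> k <= Y x.
    move=> nAx; rewrite /Y /k -invf_div lef_pV2 ?posrE //.
    by apply: ltW; rewrite ltNge; apply/negP.
  have mAE : measurable_fun setT (fun x => (\1_A x : R)%:E).
    by apply/measurable_EFinP; exact: measurable_indic.
  have mBE : measurable_fun setT (fun x => (\1_B x : R)%:E) by apply/measurable_EFinP; exact: measurable_indic.
  have mkAE : measurable_fun setT (fun x => k%:E * (\1_A x)%:E)%E by exact: measurable_funeM.
  have mkBE : measurable_fun setT (fun x => k%:E * (\1_B x)%:E)%E by exact: measurable_funeM.
  have mYAE : measurable_fun setT (fun x => (Y x * \1_A x)%:E) by exact/measurable_EFinP.
  have mYBE : measurable_fun setT (fun x => (Y x * \1_B x)%:E) by exact/measurable_EFinP.
  have key : (\int[P]_x ((Y x * \1_A x)%:E + k%:E * (\1_B x)%:E) <=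
              \int[P]_x ((Y x * \1_B x)%:E + k%:E * (\1_A x)%:E))%E.
    apply: ge0_le_integral => //.
    - by move=> x _; apply: adde_ge0; [rewrite lee_fin mulr_ge0 // ind_ge0|rewrite mule_ge0 // lee_fin ind_ge0].
    - exact: emeasurable_funD.
    - exact: emeasurable_funD.
    move=> x _; rewrite -!EFinM -!EFinD lee_fin !indicE.
    case: (boolP (x \in A)) => xA; case: (boolP (x \in B)) => xB /=;
      rewrite ?mulr1 ?mulr0 ?addr0 ?add0r //.
    + exact: YA (set_mem xA).
    + by apply: YnA => Ax; move/negP: xA; apply; exact: mem_set.
  rewrite !ge0_integralD // in key; try solve [move=> x _; rewrite ?mule_ge0 // lee_fin ?mulr_ge0 ?ind_ge0 //
    | by move=> x _; rewrite lee_fin mulr_ge0 // ind_ge0].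
  rewrite !ge0_integralZl_EFin // in key; try solve [move=> x _; rewrite lee_fin ?ind_ge0 //].
  rewrite !integral_indic // !setIT in key.
  rewrite -(@leeD2rE _ (k%:E * P B)); last by rewrite fin_numM // fin_num_measure.
  apply: (le_trans key); rewrite le_eqVlt; apply/orP; left; apply/eqP.
  congr (_ + _)%E; congr (_ * _)%E; exact: PAB.
- have PBc0 : P (~` B) = 0%E.
    rewrite PBc; congr EFin; apply/eqP; rewrite eq_le e0 andbT.
    have : P (~` A) = 0%E.
      rewrite (_ : ~` A = set0) ?measure0 //; apply/seteqP; split => x //=.
      rewrite /A /= ta_eq0; apply; rewrite divr_ge0 // ltW //.
    by rewrite PAc => -[->].
  rewrite (ge0_negligible_integral _ _ _ _ PBc0); last 4 first.
  - exact: measurableC.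
  - by [].
  - exact/measurable_EFinP.
  - by move=> x _; rewrite lee_fin mulr_ge0 // ind_ge0.
  rewrite [leRHS](ge0_negligible_integral _ _ _ _ PBc0); last 4 first.
  - exact: measurableC.
  - by [].
  - exact/measurable_EFinP.
  - by move=> x _; rewrite lee_fin mulr_ge0 // ind_ge0.
  apply: ge0_le_integral.
  - by apply: measurableD => //; exact: measurableC.
  - by move=> x _; rewrite lee_fin mulr_ge0 // ind_ge0.
  - exact/measurable_funTS/measurable_EFinP.
  - exact/measurable_funTS/measurable_EFinP.
  move=> x [_ /= /contrapT Bx]; rewrite lee_fin ler_wpM2l //.
  by rewrite [\1_B x]indicE mem_set // indicE; case: (x \in A); rewrite ?lexx ?ler01.
Qed.
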